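(* Let $(S,T,F,M_0,\ell)$ be a Petri net, $T_+\subseteq T$ a set of transitions such that $F\restriction(S\cup T_+)$ is acyclic, and $S_+\subseteq S$ a set of places. Let $\bar M\in\mathbb N^{S_+}$ and let $H$ be a finite multiset in $\mathbb N^{T_+}$ such that $\bar M+[\![H]\!]\in\mathbb N^S$. Then (a) for any faithful place $s$ w.r.t. $T_+$ and $S_+$, $(\bar M+[\![H]\!])(s)\cdot{}^*s\le\bar M$; (b) for any $k\in\mathbb N$ and any transition $t$ with $(\bar M+[\![H]\!])[k\cdot\{t\}\rangle$, we have $k\cdot{}^*t\le\bar M$.
   Context: A Petri net $(S,T,F,M_0,\ell)$ has disjoint $S,T$ and $F:(S\times T)\cup(T\times S)\to\mathbb N$. ${}^\bullet x(y)=F(y,x)$, $x^\bullet(y)=F(x,y)$, extended additively to finite multisets $H$ of transitions; $[\![H]\!]=H^\bullet-{}^\bullet H$ (a signed multiset of places; multisets over $S_+$ are identified with multisets over $S$ that vanish outside $S_+$). $M[G\rangle$ iff ${}^\bullet G\le M$. $F\restriction(S\cup T_+)$ is acyclic iff there is no nonempty path $x_0x_1\cdots x_n$ with $x_0=x_n$, all $x_i\in S\cup T_+$ and $F(x_i,x_{i+1})>0$. A path is a sequence $\pi=x_0x_1\cdots x_n$ of places and transitions with $F(x_i,x_{i+1})>0$ for $0\le i<n$; its arc weight is $F(\pi)=\prod_{i=0}^{n-1}F(x_i,x_{i+1})$. A place $s$ is faithful w.r.t. $T_+$ and $S_+$ iff $|\{s\}\cap S_+|+\sum_{t\in T_+}F(t,s)=1$.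 A path from $x_0$ to $x_n$ is faithful iff every $x_i$ with $0\le i<n$ is either a transition in $T_+$ or a faithful place. For $x\in S\cup T$, ${}^*x\in(\mathbb N\cup\{\infty\})^{S_+}$ is given by ${}^*x(s)=\sup\{F(\pi)\mid\pi$ a faithful path from $s\in S_+$ to $x\}$ (0 if no such path); scalar multiplication uses the convention $0\cdot\infty=0$. *)

(* Defs.v *)
From mathcomp Require Import all_boot.
From Stdlib Require Import ClassicalEpsilon.
Set Implicit Arguments. Unset Strict Implicit. Unset Printing Implicit Defensive.

Inductive enat := Fin of nat | Inf.

(* supremum of a set of naturals in N ∪ {∞}; sup of the empty set is 0 *)
Definition sup_nat (P : nat -> Prop) : enat :=
  match excluded_middle_informative (exists b, forall n, P n -> n <= b) with
  | left _ => Fin (epsilon (inhabits 0%N)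
                 (fun m => (forall n, P n -> n <= m) /\
                           (forall b, (forall n, P n -> n <= b) -> m <= b)))
  | right _ => Inf
  end.

Definition emul (k : nat) (e : enat) : enat :=
  match e with Fin n => Fin (k * n) | Inf => if k == 0 then Fin 0 else Inf end.

Definition ele (e : enat) (m : nat) : Prop :=
  match e with Fin n => n <= m | Inf => False end.

Section Net.
(* A Petri net with places S and transitions T (disjoint: nodes are S + T).
   F is split into Fst : S×T -> N and Fts : T×S -> N. *)
Variables (S T : Type) (Fst : S -> T -> nat) (Fts : T -> S -> nat).

Definition node := (S + T)%type.

Definition Fn (x y : node) : nat :=
  match x, y with
  | inl s, inr t => Fst s t
  | inr t, inl s => Fts t s
  | _, _ => 0
  end.

(* preset / postset of a finite multiset of transitions (a list) *)
Definition pre (G : seq T) (s : S) : nat := sumn [seq Fst s t | t <- G].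
Definition post (G : seq T) (s : S) : nat := sumn [seq Fts t s | t <- G].

(* (Mbar + [[H]])(s); meaningful (untruncated) when pre H s <= Mbar s + post H s *)
Definition after (M : S -> nat) (H : seq T) (s : S) : nat :=
  M s + post H s - pre H s.

(* the path x :: rest  (x_0 = x, x_n = last x rest) *)
Fixpoint is_path (x : node) (rest : seq node) : Prop :=
  match rest with [::] => True | y :: r => 0 < Fn x y /\ is_path y r end.

Fixpoint pweight (x : node) (rest : seq node) : nat :=
  match rest with [::] => 1 | y :: r => Fn x y * pweight y r end.

Variables (Tplus : T -> bool) (Splus : S -> bool).

Definition in_STp (x : node) : bool :=
  match x with inl _ => true | inr t => Tplus t end.

Definition acyclic : Prop :=
  forall (x : node) (rest : seq node),
    rest <> [::] -> is_path x rest -> last x rest = x ->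
    all in_STp (x :: rest) -> False.

(* |{s} ∩ S_+| + Σ_{t ∈ T_+} F(t,s) = 1, for possibly infinite T
   (a sum of naturals equals 1 iff exactly one term is 1 and all others 0) *)
Definition faithful (s : S) : Prop :=
  (Splus s /\ forall t, Tplus t -> Fts t s = 0) \/
  (~~ Splus s /\ exists t0, [/\ Tplus t0, Fts t0 s = 1 &
                              forall t, Tplus t -> t <> t0 -> Fts t s = 0]).

Definition faithful_node (x : node) : Prop :=
  match x with inl s => faithful s | inr t => Tplus t end.

(* every x_i with i < n is a T_+ transition or a faithful place *)
Fixpoint faithful_prefix (x : node) (rest : seq node) : Prop :=
  match rest with [::] => True | y :: r => faithful_node x /\ faithful_prefix y r end.

(* *x (s) = sup { F(pi) | pi faithful path from s ∈ S_+ to x } (0 if none) *)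
Definition star (x : node) (s : S) : enat :=
  sup_nat (fun w => exists rest : seq node,
     [/\ Splus s, is_path (inl s) rest, faithful_prefix (inl s) rest,
         last (inl s) rest = x & pweight (inl s) rest = w]).

End Net.

(* Main.v *)
Require Import Defs.
From mathcomp Require Import all_boot.
From Stdlib Require Import Classical ClassicalEpsilon.
Set Implicit Arguments. Unset Strict Implicit.

Lemma lub_ex (P : nat -> Prop) b : (forall n, P n -> n <= b) ->
  exists m, (forall n, P n -> n <= m) /\ (forall b', (forall n, P n -> n <= b') -> m <= b').
Proof.
elim: b => [|b IH] Hb.
  by exists 0; split.
case: (classic (forall n, P n -> n <= b)) => Hc; first exact: IH.
exists b.+1; split => // b' Hb'.
case: (leqP b.+1 b') => // Hlt; exfalso; apply: Hc => n Pn.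
exact: leq_trans (Hb' n Pn) _.
Qed.

Lemma sup_le (P : nat -> Prop) c m : (forall w, P w -> c * w <= m) ->
  ele (emul c (sup_nat P)) m.
Proof.
move=> HP; rewrite /sup_nat.
case: excluded_middle_informative => [[b Hb]|Hn].
  have [n [H1 H2]] := @lub_ex P b Hb.
  have := epsilon_spec (inhabits 0) (fun m0 => (forall n0, P n0 -> n0 <= m0) /\
      (forall b0, (forall n0, P n0 -> n0 <= b0) -> m0 <= b0)) (ex_intro _ n (conj H1 H2)).
  set e := epsilon _ _ => -[_ He] /=.
  case: c HP => [|c] HP //=.
  have : e <= m %/ c.+1.
    apply: He => w Pw; rewrite leq_divRL // mulnC; exact: HP.
  rewrite leq_divRL // mulnC //.
case: c HP => [|c] HP //=.
exfalso; apply: Hn; exists m => w Pw; apply: leq_trans (HP w Pw).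
by rewrite leq_pmull.
Qed.

Section P.
Variables (S T : Type) (Fst : S -> T -> nat) (Fts : T -> S -> nat) (Tplus : T -> bool).

Lemma is_path_rcons x r y : is_path Fst Fts x (rcons r y) <->
  is_path Fst Fts x r /\ 0 < Fn Fst Fts (last x r) y.
Proof. elim: r x => [|z r IH] x /=; first by split=> [[]|[]]. by rewrite IH; tauto. Qed.

Lemma pweight_rcons x r y : pweight Fst Fts x (rcons r y) =
  pweight Fst Fts x r * Fn Fst Fts (last x r) y.
Proof. elim: r x => [|z r IH] x /=; first by rewrite mul1n muln1. by rewrite IH mulnA. Qed.

Lemma fp_rcons Splus x r y : faithful_prefix Fts Tplus Splus x (rcons r y) <->
  faithful_prefix Fts Tplus Splus x r /\ faithful_node Fts Tplus Splus (last x r).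
Proof. elim: r x => [|z r IH] x /=; first by split=> [[]|[]]. by rewrite IH; tauto. Qed.
End P.

Lemma post0 S T (Fts : T -> S -> nat) (Tplus : T -> bool) (Splus : S -> bool) s' H :
  all Tplus H -> Splus s' -> faithful Fts Tplus Splus s' -> post Fts H s' = 0.
Proof.
move=> HH Ss' [[_ Hz]|[Hn _]]; last by rewrite Ss' in Hn.
rewrite /post; elim: H HH => [|t H' IH] //= /andP[Ht HH'].
by rewrite Hz // IH.
Qed.

Lemma key S T (Fst : S -> T -> nat) (Fts : T -> S -> nat) (Tplus : T -> bool) (Splus : S -> bool) H p q t1 :
  all Tplus H -> faithful Fts Tplus Splus p -> ~~ Splus p -> Tplus t1 ->
    0 < Fts t1 p -> Fst q t1 * post Fts H p <= pre Fst H q.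
Proof.
move=> HH [[Sp _]|[_ [t0 [Ht0 E0 Hu]]]] nSp Tt1 Pt1; first by rewrite Sp in nSp.
have e1 : t1 = t0.
  apply: NNPP => ne; by rewrite Hu in Pt1.
subst t1.
rewrite /post /pre; elim: H HH => [|t H' IH] /=; first by rewrite muln0.
move=> /andP[Ht HH'].
rewrite mulnDr; apply: leq_add; last exact: IH.
case: (classic (t = t0)) => [->|ne]; first by rewrite E0 muln1.
by rewrite Hu // muln0.
Qed.

Unset Implicit Arguments. Set Strict Implicit.
Theorem lemma6p7 (S T : Type) (Fst : S -> T -> nat) (Fts : T -> S -> nat)
  (Tplus : T -> bool) (Splus : S -> bool)
  (Hacyc : acyclic Fst Fts Tplus)
  (Mbar : S -> nat) (HMbar : forall s, ~~ Splus s -> Mbar s = 0)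
  (H : seq T) (HH : all Tplus H)
  (Hnat : forall s, pre Fst H s <= Mbar s + post Fts H s) :
  (forall s : S, faithful Fts Tplus Splus s ->
     forall s' : S, Splus s' ->
       ele (emul (after Fst Fts Mbar H s) (star Fst Fts Tplus Splus (inl s) s'))
           (Mbar s'))
  /\
  (forall (k : nat) (t : T),
     (forall s : S, pre Fst (nseq k t) s <= after Fst Fts Mbar H s) ->
     forall s' : S, Splus s' ->
       ele (emul k (star Fst Fts Tplus Splus (inr t) s')) (Mbar s')).
Proof.
have A : forall s', Splus s' -> forall n r p, size r <= n ->
    is_path Fst Fts (inl s') r -> faithful_prefix Fts Tplus Splus (inl s') r ->
    last (inl s') r = inl p -> faithful Fts Tplus Splus p ->
    (Mbar p + post Fts H p) * pweight Fst Fts (inl s') r <= Mbar s'.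
  move=> s' Ss'; elim=> [|n IH] r p.
    rewrite leqn0 => /nilP -> _ _ /= [<-] fp.
    by rewrite (post0 HH Ss' fp) addn0 muln1.
  case/lastP: r => [|r y] Hs.
    move=> _ _ /= [<-] fp; by rewrite (post0 HH Ss' fp) addn0 muln1.
  rewrite last_rcons => /is_path_rcons [Hp1 Hf1] /fp_rcons [Hfp1 Hfn1] Ey fp.
  subst y.
  case/lastP: r Hs Hp1 Hf1 Hfp1 Hfn1 => [|r y] Hs Hp1 Hf1 Hfp1 Hfn1 //=.
  rewrite last_rcons in Hf1 Hfn1.
  case: y Hs Hp1 Hfp1 Hf1 Hfn1 => [q|t1] Hs Hp1 Hfp1 //= Hf1 Tt1.
  move: Hp1 => /is_path_rcons [Hp2 Hf2]; move: Hfp1 => /fp_rcons [Hfp2 Hfn2].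
  case Eq: (last (inl s') r) Hf2 Hfn2 => [q|t2] //= Hf2 fq.
  rewrite size_rcons size_rcons in Hs.
  have IHq := IH r q (leq_trans (leqnSn _) (ltnSE Hs)) Hp2 Hfp2 Eq fq.
  have nSp : ~~ Splus p.
    apply/negP => Sp; case: fp => [[_ Hz]|[Hn _]]; last by rewrite Sp in Hn.
    by rewrite Hz in Hf1.
  have Hle1 : Fts t1 p <= 1.
    case: fp => [[Sp _]|[_ [t0 [_ E0 Hu]]]]; first by rewrite Sp in nSp.
    case: (classic (t1 = t0)) => [->|ne]; first by rewrite E0.
    by rewrite Hu.
  have K := key Fst q HH fp nSp Tt1 Hf1.
  rewrite !pweight_rcons Eq last_rcons /= HMbar // add0n.
  apply: leq_trans IHq.
  set w := pweight _ _ _ r.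
  apply: (@leq_trans (post Fts H p * (w * Fst q t1))).
    rewrite leq_mul2l; apply/orP; right.
    by case: (Fts t1 p) Hle1 => [|[|]] //= _; rewrite ?muln0 ?muln1.
  rewrite [w * _]mulnC mulnA [post Fts H p * _]mulnC.
  exact: leq_mul (leq_trans K (Hnat q)) (leqnn _).
split.
  move=> s fs s' Ss'; apply: sup_le => w [r [_ Hp Hfp Hl Hw]]; rewrite -Hw.
  apply: leq_trans (A s' Ss' (size r) r s (leqnn _) Hp Hfp Hl fs).
  by rewrite leq_mul2r /after leq_subr orbT.
move=> k t Hk s' Ss'; apply: sup_le => w [r [_ Hp Hfp Hl Hw]]; subst w.
case/lastP: r Hp Hfp Hl => [|r y] //.
rewrite last_rcons => /is_path_rcons[Hp Hf] /fp_rcons[Hfp Hfn] Ey; subst y.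
rewrite pweight_rcons.
case Eq: (last (inl s') r) Hf Hfn => [q|t2] //= Hf fq.
have Aq := A s' Ss' (size r) r q (leqnn _) Hp Hfp Eq fq.
apply: leq_trans Aq.
have Hq := Hk q; rewrite /pre map_nseq sumn_nseq /after in Hq.
rewrite [pweight _ _ _ r * _]mulnC mulnA.
apply: leq_mul (leqnn _); rewrite mulnC; exact: leq_trans Hq (leq_subr _ _).
Qed.
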